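(* Assume $D=D_K$ is prime, let $p>2$ be a prime split in $K$ (equivalently $\chi_K(p)=1$), and let $\pi\in\mathcal O$ with $N(\pi)=p$. Then for all $u,v\in\mathcal D^{-1}$ and all $\sigma\in\Gamma_0(p)$, $$M_{\pi u,\pi v}(\sigma)=M_{u,v}\!\left(\begin{pmatrix}p&0\\0&1\end{pmatrix}\sigma\begin{pmatrix}p^{-1}&0\\0&1\end{pmatrix}\right).$$
   Context: $K$ is an imaginary quadratic field of class number one with discriminant $-D$, ring of integers $\mathcal O$, quadratic character $\chi_K$, $N(a)=a\bar a=|a|^2$, $\mathcal D^{-1}=\mathcal O/\sqrt{-D}$, $e[z]=e^{2\pi iz}$. For $\sigma=\begin{pmatrix}a&b\\ c&d\end{pmatrix}\in\mathrm{SL}_2(\mathbf Z)$ and $u,v\in\mathcal D^{-1}$ define $M_{u,v}(\sigma)=\frac{-i}{c\sqrt D}\sum_{\gamma\in(u+\mathcal O)/c\mathcal O}e\big[\frac{a|\gamma|^2-\gamma\bar v-\bar\gamma v+d|v|^2}{c}\big]$ if $c\ne0$, and $M_{u,v}(\sigma)=\mathrm{sign}(a)\,\delta_{u,av}\,e[ab|u|^2]$ if $c=0$, where $\delta_{u,av}=1$ if $u\equiv av\pmod{\mathcal O}$ and $0$ otherwise. (These are the coefficients in the transformation law $\vartheta_u|[\sigma]_1=\sum_{v\in\mathcal D^{-1}/\mathcal O}M_{u,v}(\sigma)\vartheta_v$ of the theta functions $\vartheta_u(\tau,z,w)=\sum_{a\in u+\mathcal O}e[N(a)\tau+\bar az+aw]$.)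 *)

(* Defs.v *)
From Stdlib Require Import Reals ZArith Znumtheory List ClassicalEpsilon.
Open Scope R_scope.

Definition Cx : Type := (R * R)%type.
Definition C0 : Cx := (0, 0).
Definition C1 : Cx := (1, 0).
Definition Ci : Cx := (0, 1).
Definition Cadd (z w : Cx) : Cx := (fst z + fst w, snd z + snd w).
Definition Copp (z : Cx) : Cx := (- fst z, - snd z).
Definition Csub (z w : Cx) : Cx := Cadd z (Copp w).
Definition Cmul (z w : Cx) : Cx :=
  (fst z * fst w - snd z * snd w, fst z * snd w + snd z * fst w).
Definition Cconj (z : Cx) : Cx := (fst z, - snd z).
Definition Cscale (r : R) (z : Cx) : Cx := (r * fst z, r * snd z).
Definition Csum (l : list Cx) : Cx := fold_right Cadd C0 l.

(* e[z] = exp(2 pi i z) for complex z *)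
Definition e (z : Cx) : Cx :=
  (exp (- 2 * PI * snd z) * cos (2 * PI * fst z),
   exp (- 2 * PI * snd z) * sin (2 * PI * fst z)).

Definition Nm (z : Cx) : Cx := Cmul z (Cconj z).

Definition sqrtmD (D : Z) : Cx := (0, sqrt (IZR D)).
(* the element a + b * (1 + sqrt(-D))/2 of O  (D = 3 mod 4) *)
Definition OZ (D a b : Z) : Cx :=
  (IZR a + IZR b / 2, IZR b * sqrt (IZR D) / 2).
Definition In_O (D : Z) (z : Cx) : Prop := exists a b : Z, z = OZ D a b.
(* inverse different  D^{-1} = O / sqrt(-D) *)
Definition In_Dinv (D : Z) (z : Cx) : Prop := In_O D (Cmul z (sqrtmD D)).

Definition is_ideal (D : Z) (I : Cx -> Prop) : Prop :=
  (forall z, I z -> In_O D z) /\ I C0 /\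
  (forall z w, I z -> I w -> I (Cadd z w)) /\
  (forall r z, In_O D r -> I z -> I (Cmul r z)).
Definition class_number_one (D : Z) : Prop :=
  forall I, is_ideal D I ->
    exists g, In_O D g /\ forall z, I z <-> exists r, In_O D r /\ z = Cmul r g.

(* chi_K(p) = 1 for an odd prime p : -D is a nonzero square mod p *)
Definition chiK_is_one (D p : Z) : Prop :=
  ~ (p | D)%Z /\ exists x : Z, (p | x * x + D)%Z.

Definition Rdelta (P : Prop) : R :=
  if excluded_middle_informative P then 1 else 0.

(* representatives gamma = u + x + y*omega, 0 <= x,y < |c|, of (u+O)/cO *)
Definition reps (D : Z) (u : Cx) (c : Z) : list Cx :=
  flat_map (fun x : nat =>
    map (fun y : nat => Cadd u (OZ D (Z.of_nat x) (Z.of_nat y)))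
        (seq 0 (Z.to_nat (Z.abs c))))
    (seq 0 (Z.to_nat (Z.abs c))).

(* M_{u,v}(sigma) for sigma = [[a,b],[c,d]] *)
Definition M (D : Z) (u v : Cx) (a b c d : Z) : Cx :=
  if Z.eqb c 0 then
    Cscale (IZR (Z.sgn a) * Rdelta (In_O D (Csub u (Cscale (IZR a) v))))
           (e (Cscale (IZR (a * b)) (Nm u)))
  else
    Cmul (0, - / (IZR c * sqrt (IZR D)))
      (Csum (map (fun g =>
         e (Cscale (/ IZR c)
              (Cadd (Csub (Csub (Cscale (IZR a) (Nm g)) (Cmul g (Cconj v)))
                          (Cmul (Cconj g) v))
                    (Cscale (IZR d) (Nm v)))))
        (reps D u c))).

(* Main.v *)
Require Import Defs.
From Stdlib Require Import Reals ZArith Znumtheory List Permutation Lra Lia FunctionalExtensionality ClassicalEpsilon.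
Open Scope R_scope.


Ltac cxe := repeat match goal with
  | z : Cx |- _ => destruct z
  end; unfold Csub in *; unfold Cadd, Copp, Cmul, Cconj, Cscale, Nm, C0, Defs.C1 in *; simpl in *.

Lemma cx_eq (x1 y1 x2 y2 : R) : x1 = x2 -> y1 = y2 -> (x1, y1) = (x2, y2).
Proof. intros; subst; reflexivity. Qed.

Lemma cos_perZ y m : cos (y + 2 * PI * IZR m) = cos y.
Proof.
  destruct m as [|q|q].
  - rewrite Rmult_0_r, Rplus_0_r; auto.
  - replace (IZR (Z.pos q)) with (INR (Pos.to_nat q)) by (rewrite INR_IZR_INZ, positive_nat_Z; reflexivity).
    replace (2 * PI * INR (Pos.to_nat q)) with (2 * INR (Pos.to_nat q) * PI) by ring.
    apply cos_period.
  - replace (IZR (Z.neg q)) with (- INR (Pos.to_nat q)) by (rewrite INR_IZR_INZ, positive_nat_Z, <- opp_IZR; reflexivity).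
    rewrite <- (cos_period (y + 2 * PI * - INR (Pos.to_nat q)) (Pos.to_nat q)).
    f_equal; ring.
Qed.

Lemma sin_perZ y m : sin (y + 2 * PI * IZR m) = sin y.
Proof.
  destruct m as [|q|q].
  - rewrite Rmult_0_r, Rplus_0_r; auto.
  - replace (IZR (Z.pos q)) with (INR (Pos.to_nat q)) by (rewrite INR_IZR_INZ, positive_nat_Z; reflexivity).
    replace (2 * PI * INR (Pos.to_nat q)) with (2 * INR (Pos.to_nat q) * PI) by ring.
    apply sin_period.
  - replace (IZR (Z.neg q)) with (- INR (Pos.to_nat q)) by (rewrite INR_IZR_INZ, positive_nat_Z, <- opp_IZR; reflexivity).
    rewrite <- (sin_period (y + 2 * PI * - INR (Pos.to_nat q)) (Pos.to_nat q)).
    f_equal; ring.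
Qed.

Lemma e_add z w : e (Cadd z w) = Cmul (e z) (e w).
Proof.
  destruct z as [x1 y1], w as [x2 y2]; unfold e, Cadd, Cmul; simpl.
  replace (- 2 * PI * (y1 + y2)) with (- 2 * PI * y1 + - 2 * PI * y2) by ring.
  replace (2 * PI * (x1 + x2)) with (2 * PI * x1 + 2 * PI * x2) by ring.
  rewrite exp_plus, cos_plus, sin_plus. apply cx_eq; ring.
Qed.

Lemma e_int n : e (IZR n, 0) = Defs.C1.
Proof.
  unfold e, Defs.C1; simpl.
  rewrite Rmult_0_r, exp_0, !Rmult_1_l.
  pose proof (cos_perZ 0 n) as H1. pose proof (sin_perZ 0 n) as H2.
  rewrite Rplus_0_l in H1, H2. rewrite H1, H2, cos_0, sin_0. reflexivity.
Qed.

Lemma e_one_int x : e (x, 0) = Defs.C1 -> exists m, x = IZR m.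
Proof.
  unfold e, Defs.C1; simpl. rewrite Rmult_0_r, exp_0, !Rmult_1_l.
  intro H. injection H as Hc Hs.
  destruct (sin_eq_0_0 _ Hs) as [k Hk].
  destruct (Zeven_odd_dec k) as [He|Ho]; [destruct (Zeven_ex _ He) as [m Hm]|destruct (Zodd_ex _ Ho) as [m Hm]]; subst k.
  - exists m. rewrite mult_IZR in Hk.
    assert (PI <> 0) by (pose proof PI_RGT_0; lra).
    apply (Rmult_eq_reg_l (2 * PI)); [|lra]. rewrite Hk. ring.
  - exfalso. rewrite Hk in Hc. rewrite plus_IZR, mult_IZR in Hc.
    replace ((IZR 2 * IZR m + IZR 1) * PI) with (PI + 2 * PI * IZR m) in Hc by (simpl; ring).
    rewrite cos_perZ, cos_PI in Hc. lra.
Qed.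


Definition NS (m : nat) (f : nat -> Cx) : Cx := Csum (map f (seq 0 m)).
Definition S1 (N : Z) (h : Z -> Cx) : Cx := NS (Z.to_nat N) (fun i => h (Z.of_nat i)).
Definition S2 (N : Z) (H : Z -> Z -> Cx) : Cx := S1 N (fun X => S1 N (fun Y => H X Y)).

Lemma Csum_app l1 l2 : Csum (l1 ++ l2) = Cadd (Csum l1) (Csum l2).
Proof.
  induction l1; simpl.
  - destruct (Csum l2); unfold Cadd, C0; simpl; apply cx_eq; ring.
  - rewrite IHl1. cxe. apply cx_eq; ring.
Qed.

Lemma Csum_perm l1 l2 : Permutation l1 l2 -> Csum l1 = Csum l2.
Proof.
  induction 1; simpl; auto.
  - rewrite IHPermutation; auto.
  - cxe. apply cx_eq; ring.
  - congruence.
Qed.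

Lemma NS_S m f : NS (S m) f = Cadd (NS m f) (f m).
Proof.
  unfold NS. rewrite seq_S, map_app, Csum_app. simpl.
  destruct (f m); cxe; apply cx_eq; ring.
Qed.

Lemma NS_0 f : NS 0 f = C0.
Proof. reflexivity. Qed.

Lemma NS_cons m f : NS (S m) f = Cadd (f 0%nat) (NS m (fun i => f (S i))).
Proof.
  unfold NS. simpl. f_equal. rewrite <- seq_shift, map_map. reflexivity.
Qed.

Lemma NS_ext m f g : (forall i, f i = g i) -> NS m f = NS m g.
Proof. intros H; unfold NS; f_equal; apply map_ext; auto. Qed.

Lemma NS_add m1 m2 f : NS (m1 + m2) f = Cadd (NS m1 f) (NS m2 (fun i => f (m1 + i)%nat)).
Proof.
  induction m2.
  - rewrite Nat.add_0_r, NS_0. destruct (NS m1 f); unfold Cadd, C0; simpl; apply cx_eq; ring.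
  - rewrite <- plus_n_Sm, !NS_S, IHm2. cxe. apply cx_eq; ring.
Qed.

Lemma NS_mulr m f z : NS m (fun i => Cmul (f i) z) = Cmul (NS m f) z.
Proof.
  induction m.
  - rewrite !NS_0. cxe. apply cx_eq; ring.
  - rewrite !NS_S, IHm. cxe. apply cx_eq; ring.
Qed.

Lemma NS_scale m f r : NS m (fun i => Cscale r (f i)) = Cscale r (NS m f).
Proof.
  induction m.
  - rewrite !NS_0. cxe. apply cx_eq; ring.
  - rewrite !NS_S, IHm. cxe. apply cx_eq; ring.
Qed.

Lemma NS_zero m f : (forall i, (i < m)%nat -> f i = C0) -> NS m f = C0.
Proof.
  induction m; intros H; auto.
  rewrite NS_S, IHm.
  - rewrite H by lia. cxe. apply cx_eq; ring.
  - intros i Hi; apply H; lia.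
Qed.

Lemma NS_shift1 m f : Cadd (NS m (fun i => f (S i))) (f 0%nat) = Cadd (NS m f) (f m).
Proof.
  induction m.
  - rewrite !NS_0. reflexivity.
  - rewrite !NS_S. 
    assert (E: Cadd (Cadd (NS m (fun i => f (S i))) (f (S m))) (f 0%nat)
      = Cadd (Cadd (NS m (fun i => f (S i))) (f 0%nat)) (f (S m))) by (cxe; apply cx_eq; ring).
    rewrite E, IHm. reflexivity.
Qed.

Lemma Cadd_cancel_r x y z : Cadd x z = Cadd y z -> x = y.
Proof. cxe. intro H. injection H as H1 H2. apply cx_eq; lra. Qed.

Lemma per_mult (h : Z -> Cx) N : (forall z, h (z + N)%Z = h z) ->
  forall q z, h (z + N * q)%Z = h z.
Proof.
  intros Hp.
  assert (Hn : forall m z, h (z + N * Z.of_nat m)%Z = h z).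
  { induction m; intro z.
    - f_equal; lia.
    - rewrite <- (IHm z). rewrite <- (Hp (z + N * Z.of_nat m)%Z). f_equal; lia. }
  intros q z. destruct (Z_le_gt_dec 0 q).
  - rewrite <- (Z2Nat.id q) by lia. apply Hn.
  - rewrite <- (Hn (Z.to_nat (- q)) (z + N * q)%Z). f_equal. rewrite Z2Nat.id by lia. lia.
Qed.

Lemma S1_ext N f g : (forall z, f z = g z) -> S1 N f = S1 N g.
Proof. intros H; unfold S1; apply NS_ext; auto. Qed.

Lemma S1_shift1 N h : (forall z, h (z + N)%Z = h z) ->
  S1 N (fun z => h (z + 1)%Z) = S1 N h.
Proof.
  intros Hp. unfold S1.
  destruct (Z_le_gt_dec 0 N) as [HN|HN].
  - apply (Cadd_cancel_r _ _ (h 0%Z)).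
    pose proof (NS_shift1 (Z.to_nat N) (fun i => h (Z.of_nat i))) as E. cbv beta in E.
    replace (fun i : nat => h (Z.of_nat i + 1)%Z) with (fun i : nat => h (Z.of_nat (S i))).
    2:{ apply functional_extensionality; intro i; f_equal; lia. }
    change (h 0%Z) with (h (Z.of_nat 0)). rewrite E. f_equal. rewrite Z2Nat.id by lia. simpl. rewrite <- (Hp 0%Z). reflexivity.
  - replace (Z.to_nat N) with 0%nat by lia. reflexivity.
Qed.

Lemma S1_shift N h : (forall z, h (z + N)%Z = h z) ->
  forall k, S1 N (fun z => h (z + k)%Z) = S1 N h.
Proof.
  intros Hp.
  assert (Hn : forall m, S1 N (fun z => h (z + Z.of_nat m)%Z) = S1 N h).
  { induction m.
    - apply S1_ext; intro z; f_equal; lia.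
    - rewrite <- IHm.
      rewrite <- (S1_shift1 N (fun z => h (z + Z.of_nat m)%Z)).
      + apply S1_ext; intro z; f_equal; lia.
      + intro z. rewrite <- (Hp (z + Z.of_nat m)%Z). f_equal; lia. }
  intro k.
  destruct (Z_le_gt_dec 1 N) as [HN|HN].
  2:{ unfold S1. replace (Z.to_nat N) with 0%nat by lia. reflexivity. }
  destruct (Z_le_gt_dec 0 k).
  - rewrite <- (Z2Nat.id k) by lia. apply Hn.
  - rewrite <- (Hn (Z.to_nat (k - N * k))).
    apply S1_ext; intro z. rewrite Z2Nat.id by nia.
    rewrite <- (per_mult h N Hp k (z + (k - N * k))%Z). f_equal; lia.
Qed.

Lemma S1_mult N q h : (0 <= N)%Z -> (0 <= q)%Z -> (forall z, h (z + N)%Z = h z) ->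
  S1 (q * N) h = Cscale (IZR q) (S1 N h).
Proof.
  intros HN Hq Hp. unfold S1.
  rewrite <- (Z2Nat.id q) by lia. generalize (Z.to_nat q) as m. intro m.
  
  replace (Z.to_nat (Z.of_nat m * N)) with (m * Z.to_nat N)%nat by lia.
  induction m.
  - simpl. rewrite NS_0. cxe. apply cx_eq; ring.
  - replace (S m * Z.to_nat N)%nat with (m * Z.to_nat N + Z.to_nat N)%nat by lia.
    rewrite NS_add, IHm.
    rewrite (NS_ext _ (fun i : nat => h (Z.of_nat (m * Z.to_nat N + i))) (fun i => h (Z.of_nat i))).
    + rewrite Nat2Z.inj_succ, succ_IZR. cxe. apply cx_eq; ring.
    + intro i. rewrite <- (per_mult h N Hp (Z.of_nat m) (Z.of_nat i)). f_equal. lia.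
Qed.

Lemma S1_filter N q g : (0 <= N)%Z -> (0 < q)%Z ->
  (forall t, ~ (q | t)%Z -> g t = C0) ->
  S1 (q * N) g = S1 N (fun t => g (q * t)%Z).
Proof.
  intros HN Hq Hz. unfold S1.
  rewrite <- (Z2Nat.id N) by lia. generalize (Z.to_nat N) as m. intro m.
  rewrite Nat2Z.id.
  replace (Z.to_nat (q * Z.of_nat m)) with (m * Z.to_nat q)%nat by lia.
  induction m.
  - reflexivity.
  - replace (S m * Z.to_nat q)%nat with (m * Z.to_nat q + Z.to_nat q)%nat by lia.
    rewrite NS_add, IHm, NS_S.
    f_equal.
    destruct (Z.to_nat q) as [|q0] eqn:Eq; [lia|].
    rewrite NS_cons. rewrite NS_zero.
    + rewrite Nat.add_0_r. replace (q * Z.of_nat m)%Z with (Z.of_nat (m * S q0)) by lia.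
      destruct (g _); cxe; apply cx_eq; ring.
    + intros i Hi. apply Hz. intros [r Hr].
      assert (Z.of_nat (m * S q0 + S i) = Z.of_nat m * q + Z.of_nat (S i))%Z by lia.
      assert (Z.of_nat (S q0) = q) by lia.
      assert (Z.of_nat (S i) = q * (r - Z.of_nat m))%Z by lia.
      assert (0 < r - Z.of_nat m)%Z by nia. nia.
Qed.

Definition zseq (N : Z) : list Z := map Z.of_nat (seq 0 (Z.to_nat N)).
Definition box N := list_prod (zseq N) (zseq N).

Lemma S1_zseq N h : S1 N h = Csum (map h (zseq N)).
Proof. unfold S1, NS, zseq. rewrite map_map. reflexivity. Qed.

Lemma in_zseq N z : In z (zseq N) <-> (0 <= z < N)%Z.
Proof.
  unfold zseq. rewrite in_map_iff. split.
  - intros [i [<- Hi]]. apply in_seq in Hi. lia.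
  - intros Hz. exists (Z.to_nat z). split; [lia|]. apply in_seq. lia.
Qed.

Lemma zseq_NoDup N : NoDup (zseq N).
Proof. apply FinFun.Injective_map_NoDup; [intros ? ? ?; lia| apply seq_NoDup]. Qed.

Lemma prod_NoDup (l l' : list Z) : NoDup l -> NoDup l' -> NoDup (list_prod l l').
Proof.
  induction 1; intros Hl'; simpl; [constructor|].
  apply NoDup_app; auto.
  - apply FinFun.Injective_map_NoDup; auto. intros a b H1; injection H1; auto.
  - intros [a b] H1 H2. apply in_map_iff in H1. destruct H1 as [y [Ey _]]. injection Ey as <- <-.
    apply in_prod_iff in H2. tauto.
Qed.

Lemma Csum_map_app {A} (f : A -> Cx) l1 l2 : Csum (map f (l1 ++ l2)) = Cadd (Csum (map f l1)) (Csum (map f l2)).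
Proof. rewrite map_app; apply Csum_app. Qed.

Lemma S2_box N H : S2 N H = Csum (map (fun pr => H (fst pr) (snd pr)) (box N)).
Proof.
  unfold S2, box. rewrite S1_zseq.
  assert (G: forall l, Csum (map (fun X => S1 N (fun Y => H X Y)) l) =
     Csum (map (fun pr => H (fst pr) (snd pr)) (list_prod l (zseq N)))).
  { induction l; simpl; auto.
    rewrite Csum_map_app, IHl, S1_zseq, map_map. reflexivity. }
  apply G.
Qed.

Lemma per2 (H : Z -> Z -> Cx) N : (forall X Y, H (X + N)%Z Y = H X Y) ->
  (forall X Y, H X (Y + N)%Z = H X Y) -> forall X Y, H X Y = H (X mod N)%Z (Y mod N)%Z.
Proof.
  intros H1 H2 X Y.
  destruct (Z.eq_dec N 0) as [->|HN].
  { rewrite !Zmod_0_r. reflexivity. }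
  rewrite (Z.div_mod X N) at 1 by auto. rewrite (Z.div_mod Y N) at 1 by auto.
  rewrite (Z.add_comm (N * (X / N))), (Z.add_comm (N * (Y / N))).
  rewrite (per_mult (fun Y' => H (X mod N + N * (X / N))%Z Y') N) by (intro; apply H2).
  rewrite (per_mult (fun X' => H X' (Y mod N)%Z) N) by (intro; apply H1).
  reflexivity.
Qed.

Lemma mod_eq_div a b N : (a mod N = b mod N)%Z -> (N <> 0)%Z -> (N | a - b)%Z.
Proof.
  intros E HN. exists (a / N - b / N)%Z.
  rewrite (Z.div_mod a N HN) at 1. rewrite (Z.div_mod b N HN) at 1. rewrite E. ring.
Qed.

Lemma L3 N (H : Z -> Z -> Cx) al be ga de : (0 < N)%Z ->
  (forall X Y, H (X + N)%Z Y = H X Y) -> (forall X Y, H X (Y + N)%Z = H X Y) ->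
  (al * de - be * ga = 1 \/ al * de - be * ga = -1)%Z ->
  S2 N (fun X Y => H (al * X + be * Y)%Z (ga * X + de * Y)%Z) = S2 N H.
Proof.
  intros HN H1 H2 Hdet.
  rewrite !S2_box.
  set (phi := fun pr : Z * Z => (((al * fst pr + be * snd pr) mod N)%Z, ((ga * fst pr + de * snd pr) mod N)%Z)).
  transitivity (Csum (map (fun pr => H (fst pr) (snd pr)) (map phi (box N)))).
  { rewrite map_map. f_equal. apply map_ext. intros [X Y]. simpl.
    apply per2; auto. }
  apply Csum_perm. apply Permutation_map. apply Permutation_map_same_l.
  - apply FinFun.Injective_map_NoDup_in.
    2:{ apply prod_NoDup; apply zseq_NoDup. }
    intros [X1 Y1] [X2 Y2] I1 I2 E. unfold box in I1, I2.
    apply in_prod_iff in I1. apply in_prod_iff in I2.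
    rewrite !in_zseq in I1, I2. unfold phi in E; simpl in E.
    injection E as E1 E2.
    apply mod_eq_div in E1; [|lia]. apply mod_eq_div in E2; [|lia].
    destruct E1 as [q1 Hq1]. destruct E2 as [q2 Hq2].
    assert (Ex : ((al * de - be * ga) * (X1 - X2) = (de * q1 - be * q2) * N)%Z).
    { transitivity (de * (al * X1 + be * Y1 - (al * X2 + be * Y2)) - be * (ga * X1 + de * Y1 - (ga * X2 + de * Y2)))%Z; [ring|].
      rewrite Hq1, Hq2. ring. }
    assert (Ey : ((al * de - be * ga) * (Y1 - Y2) = (al * q2 - ga * q1) * N)%Z).
    { transitivity (al * (ga * X1 + de * Y1 - (ga * X2 + de * Y2)) - ga * (al * X1 + be * Y1 - (al * X2 + be * Y2)))%Z; [ring|].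
      rewrite Hq1, Hq2. ring. }
    assert (Hx : (N | X1 - X2)%Z).
    { destruct Hdet as [Hd|Hd]; rewrite Hd in Ex.
      - exists (de * q1 - be * q2)%Z. lia.
      - exists (- (de * q1 - be * q2))%Z. lia. }
    assert (Hy : (N | Y1 - Y2)%Z).
    { destruct Hdet as [Hd|Hd]; rewrite Hd in Ey.
      - exists (al * q2 - ga * q1)%Z. lia.
      - exists (- (al * q2 - ga * q1))%Z. lia. }
    destruct Hx as [r1 Hr1]. destruct Hy as [r2 Hr2].
    assert (r1 = 0)%Z by nia. assert (r2 = 0)%Z by nia.
    f_equal; lia.
  - intros pr Hpr. apply in_map_iff in Hpr. destruct Hpr as [[X Y] [<- _]].
    unfold phi, box; simpl. apply in_prod_iff. rewrite !in_zseq.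
    split; apply Z.mod_pos_bound; lia.
Qed.


Definition targ (c a d : Z) (w g : Cx) : Cx :=
  Cscale (/ IZR c)
    (Cadd (Csub (Csub (Cscale (IZR a) (Nm g)) (Cmul g (Cconj w))) (Cmul (Cconj g) w))
          (Cscale (IZR d) (Nm w))).
Definition term c a d w g := e (targ c a d w g).

Lemma sqrt_sq D : (0 < D)%Z -> sqrt (IZR D) * sqrt (IZR D) = IZR D.
Proof. intro; apply sqrt_sqrt. apply IZR_le; lia. Qed.

Lemma sqrt_pos' D : (0 < D)%Z -> 0 < sqrt (IZR D).
Proof. intro; apply sqrt_lt_R0. apply IZR_lt; lia. Qed.

Lemma Dinv_form D z : (0 < D)%Z -> In_Dinv D z ->
  exists ga gb, z = (IZR gb / 2, - (2 * IZR ga + IZR gb) / (2 * sqrt (IZR D))).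
Proof.
  intros HD [ga [gb H]]. exists ga, gb.
  pose proof (sqrt_pos' D HD).
  destruct z as [z1 z2]. unfold Cmul, sqrtmD, OZ in H; simpl in H.
  injection H as H1 H2. apply cx_eq.
  - apply (Rmult_eq_reg_r (sqrt (IZR D))); [|lra]. field_simplify; lra.
  - field_simplify; [|lra]. apply (Rmult_eq_reg_r (sqrt (IZR D))); [|lra]. field_simplify; lra.
Qed.

Ltac pushZ := repeat (rewrite plus_IZR || rewrite mult_IZR || rewrite opp_IZR || rewrite minus_IZR).

Lemma term_shift c a d w g z n : targ c a d w z = Cadd (targ c a d w g) (IZR n, 0) ->
  term c a d w z = term c a d w g.
Proof.
  intro H. unfold term. rewrite H, e_add, e_int. destruct (e (targ c a d w g)).
  unfold Cmul, Defs.C1; simpl; apply cx_eq; ring.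
Qed.

Lemma P_lem D k c a d w g i j : (D = 4 * k + 3)%Z -> (0 < D)%Z -> c <> 0%Z ->
  In_Dinv D g -> In_Dinv D w ->
  term c a d w (Cadd g (OZ D (c * i) (c * j))) = term c a d w g.
Proof.
  intros HDk HD Hc Hg Hw.
  destruct (Dinv_form D g HD Hg) as [ga [gb ->]].
  destruct (Dinv_form D w HD Hw) as [wa [wb ->]].
  apply (term_shift _ _ _ _ _ _ (a * (gb * i - ga * j) + a * c * (i * i + i * j + (k + 1) * j * j) - (wb * i - wa * j))).
  pose proof (sqrt_sq D HD) as Hs. pose proof (sqrt_pos' D HD) as Hsp.
  unfold targ, OZ. set (s := sqrt (IZR D)) in *. clearbody s.
  rewrite HDk in Hs. rewrite ?plus_IZR, ?mult_IZR in Hs. pushZ.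
  assert (Hk : IZR k = (s * s - 3) / 4) by lra.
  assert (Hc' : IZR c <> 0) by (apply not_0_IZR; auto).
  rewrite Hk. unfold Cadd, Csub, Copp, Cscale, Cmul, Cconj, Nm; simpl.
  apply cx_eq; field; lra.
Qed.

Lemma SC_lem p c' a d pi v g : Nm pi = (IZR p, 0) -> (p <> 0)%Z -> c' <> 0%Z ->
  term (p * c') a d (Cmul pi v) (Cmul pi g) = term c' a d v g.
Proof.
  intros HN Hp Hc. unfold term. f_equal.
  destruct pi as [p1 p2]. unfold Nm, Cmul, Cconj in HN; simpl in HN. injection HN as HN1 _.
  assert (Hp' : IZR p <> 0) by (apply not_0_IZR; auto).
  assert (Hc' : IZR c' <> 0) by (apply not_0_IZR; auto).
  unfold targ. rewrite mult_IZR. rewrite <- HN1 in *.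
  destruct v, g. unfold Cadd, Csub, Copp, Cscale, Cmul, Cconj, Nm; simpl.
  apply cx_eq; field; auto.
Qed.

Lemma SH_lem D k p A B x y ua ub va vb a d c' t sg :
  (D = 4 * k + 3)%Z -> (0 < D)%Z -> c' <> 0%Z ->
  Nm (OZ D A B) = (IZR p, 0) -> (p <> 0)%Z ->
  let pi := OZ D A B in
  let u := (IZR ub / 2, - (2 * IZR ua + IZR ub) / (2 * sqrt (IZR D))) in
  let v := (IZR vb / 2, - (2 * IZR va + IZR vb) / (2 * sqrt (IZR D))) in
  let T := (2 * ((A + B) * x + (k + 1) * B * y) + (A * y - B * x))%Z in
  targ (p * c') a d (Cmul pi v) (Cadd (Cmul pi u) (OZ D (x * t + A * (sg + c')) (y * t + B * (sg + c'))))
  = Cadd (Cadd (targ (p * c') a d (Cmul pi v) (Cadd (Cmul pi u) (OZ D (x * t + A * sg) (y * t + B * sg))))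
             (IZR (a * ub + 2 * a * sg + a * c' - vb), 0)) (IZR (a * t * T) / IZR p, 0).
Proof.
  intros HDk HD Hc HN Hp pi u v T. subst pi u v T.
  pose proof (sqrt_sq D HD) as Hs. pose proof (sqrt_pos' D HD) as Hsp.
  unfold OZ in HN. unfold Nm, Cmul, Cconj in HN; simpl in HN. injection HN as HN1 _.
  assert (Hp' : IZR p <> 0) by (apply not_0_IZR; auto).
  assert (Hc' : IZR c' <> 0) by (apply not_0_IZR; auto).
  unfold targ, OZ. set (s := sqrt (IZR D)) in *. clearbody s.
  rewrite HDk in Hs. rewrite ?plus_IZR, ?mult_IZR in Hs. pushZ.
  assert (Hk : IZR k = (s * s - 3) / 4) by lra.
  rewrite <- HN1 in *. rewrite Hk.
  unfold Cadd, Csub, Copp, Cscale, Cmul, Cconj, Nm; simpl.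
  apply cx_eq; field; repeat split; auto; try lra; intro Hz; apply Hp'; nra.
Qed.

Section OF.
Variables (D k : Z).
Hypothesis HDk : (D = 4 * k + 3)%Z.
Hypothesis HD : (0 < D)%Z.

Lemma O_mul z w : In_O D z -> In_O D w -> In_O D (Cmul z w).
Proof.
  intros [a1 [b1 ->]] [a2 [b2 ->]].
  exists (a1 * a2 - (k + 1) * b1 * b2)%Z, (a1 * b2 + b1 * a2 + b1 * b2)%Z.
  pose proof (sqrt_sq D HD) as Hs. unfold OZ. set (s := sqrt (IZR D)) in *. clearbody s.
  rewrite HDk in Hs. rewrite ?plus_IZR, ?mult_IZR in Hs.
  assert (Hk : IZR k = (s * s - 3) / 4) by lra.
  unfold Cmul; simpl. pushZ. rewrite Hk. apply cx_eq; field.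
Qed.

Lemma O_add z w : In_O D z -> In_O D w -> In_O D (Cadd z w).
Proof.
  intros [a1 [b1 ->]] [a2 [b2 ->]]. exists (a1 + a2)%Z, (b1 + b2)%Z.
  unfold OZ, Cadd; simpl. pushZ. apply cx_eq; field.
Qed.

Lemma O_scale n z : In_O D z -> In_O D (Cscale (IZR n) z).
Proof.
  intros [a1 [b1 ->]]. exists (n * a1)%Z, (n * b1)%Z.
  unfold OZ, Cscale; simpl. pushZ. apply cx_eq; field.
Qed.

Lemma O_conj z : In_O D z -> In_O D (Cconj z).
Proof.
  intros [a1 [b1 ->]]. exists (a1 + b1)%Z, (- b1)%Z.
  unfold OZ, Cconj; simpl. pushZ. apply cx_eq; field.
Qed.

Lemma O_sqrt : In_O D (sqrtmD D).
Proof. exists (-1)%Z, 2%Z. unfold OZ, sqrtmD. apply cx_eq; simpl; field. Qed.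

Lemma O_OZ X Y : In_O D (OZ D X Y).
Proof. exists X, Y; reflexivity. Qed.

Lemma Dinv_addO g X Y : In_Dinv D g -> In_Dinv D (Cadd g (OZ D X Y)).
Proof.
  intros H. unfold In_Dinv.
  replace (Cmul (Cadd g (OZ D X Y)) (sqrtmD D)) with
    (Cadd (Cmul g (sqrtmD D)) (Cmul (OZ D X Y) (sqrtmD D))) by (cxe; apply cx_eq; ring).
  apply O_add; auto. apply O_mul; [apply O_OZ|apply O_sqrt].
Qed.

Lemma Dinv_mulO z g : In_O D z -> In_Dinv D g -> In_Dinv D (Cmul z g).
Proof.
  intros Hz H. unfold In_Dinv.
  replace (Cmul (Cmul z g) (sqrtmD D)) with (Cmul z (Cmul g (sqrtmD D))) by (cxe; apply cx_eq; ring).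
  apply O_mul; auto.
Qed.

End OF.

Lemma KP_lem D k p A B x y u sg t : (D = 4 * k + 3)%Z -> (0 < D)%Z ->
  Nm (OZ D A B) = (IZR p, 0) ->
  Cadd (Cmul (OZ D A B) u) (OZ D (x * (p * t) + A * sg) (y * (p * t) + B * sg)) =
  Cmul (OZ D A B) (Cadd u (OZ D (sg + t * ((A + B) * x + (k + 1) * B * y)) (t * (A * y - B * x)))).
Proof.
  intros HDk HD HN.
  pose proof (sqrt_sq D HD) as Hs.
  unfold OZ in *. unfold Nm, Cmul, Cconj in HN; simpl in HN. injection HN as HN1 _.
  set (s := sqrt (IZR D)) in *. clearbody s.
  rewrite HDk in Hs. rewrite ?plus_IZR, ?mult_IZR in Hs.
  assert (Hk : IZR k = (s * s - 3) / 4) by lra.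
  destruct u. unfold Cadd, Cmul; simpl. pushZ. rewrite <- HN1. rewrite Hk.
  apply cx_eq; field.
Qed.

Lemma O_cancel D k p pi w : (D = 4 * k + 3)%Z -> (0 < D)%Z -> prime p -> ~ (p | D)%Z ->
  In_O D pi -> Nm pi = (IZR p, 0) -> In_Dinv D w -> In_O D (Cmul pi w) -> In_O D w.
Proof.
  intros HDk HD Hp Hnd Hpi HN Hw Hpw.
  destruct (rel_prime_bezout _ _ (prime_rel_prime p Hp D Hnd)) as [u0 v0 Hb].
  assert (E : w = Cadd (Cscale (IZR u0) (Cmul (Cconj pi) (Cmul pi w)))
                       (Cscale (IZR (- v0)) (Cmul (sqrtmD D) (Cmul w (sqrtmD D))))).
  { pose proof (sqrt_sq D HD) as Hs.
    assert (Hb' : IZR u0 * IZR p + IZR v0 * IZR D = 1).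
    { rewrite <- !mult_IZR, <- plus_IZR, Hb. reflexivity. }
    destruct pi as [p1 p2]. unfold Nm, Cmul, Cconj in HN; simpl in HN. injection HN as HN1 _.
    unfold sqrtmD. set (s := sqrt (IZR D)) in *. clearbody s.
    assert (HN2 : p1 * p1 + p2 * p2 = IZR p) by (rewrite <- HN1; ring).
    destruct w as [w1 w2]. unfold Cadd, Cmul, Cconj, Cscale; simpl. rewrite opp_IZR.
    apply cx_eq.
    - transitivity (w1 * (IZR u0 * (p1 * p1 + p2 * p2) + IZR v0 * (s * s))).
      + rewrite HN2, Hs, Hb'. ring.
      + ring.
    - transitivity (w2 * (IZR u0 * (p1 * p1 + p2 * p2) + IZR v0 * (s * s))).
      + rewrite HN2, Hs, Hb'. ring.
      + ring. }
  rewrite E. apply O_add; apply O_scale.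
  - apply (O_mul D k HDk HD); auto. apply O_conj; auto.
  - apply (O_mul D k HDk HD); [apply O_sqrt|auto].
Qed.

Lemma NT1 D k p pi : (D = 4 * k + 3)%Z -> (0 < D)%Z -> In_O D pi -> Nm pi = (IZR p, 0) ->
  exists A B, pi = OZ D A B /\ p = (A * A + A * B + (k + 1) * B * B)%Z.
Proof.
  intros HDk HD [A [B ->]] HN. exists A, B. split; auto.
  apply eq_IZR. 
  pose proof (sqrt_sq D HD) as Hs.
  unfold OZ in *. unfold Nm, Cmul, Cconj in HN; simpl in HN. injection HN as HN1 _.
  set (s := sqrt (IZR D)) in *. clearbody s.
  rewrite HDk in Hs. rewrite ?plus_IZR, ?mult_IZR in Hs.
  assert (Hk : IZR k = (s * s - 3) / 4) by lra.
  rewrite <- HN1. pushZ. rewrite Hk. field.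
Qed.

Lemma NT2 p A B k : prime p -> p = (A * A + A * B + (k + 1) * B * B)%Z ->
  exists x y, (A * y - B * x = 1)%Z.
Proof.
  intros Hp Hpe.
  assert (Hg : Z.gcd A B = 1%Z).
  { pose proof (Z.gcd_divide_l A B) as [qa Ha].
    pose proof (Z.gcd_divide_r A B) as [qb Hb].
    pose proof (Z.gcd_nonneg A B).
    set (g := Z.gcd A B) in *.
    assert (Hgg : (g * g | p)%Z).
    { exists (qa * qa + qa * qb + (k + 1) * qb * qb)%Z. rewrite Hpe, Ha, Hb. ring. }
    assert (Hgp : (g | p)%Z) by (apply (Z.divide_trans _ (g * g)); auto; exists g; ring).
    pose proof (prime_ge_2 p Hp).
    destruct (prime_divisors p Hp g Hgp) as [E|[E|[E|E]]]; try lia.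
    rewrite E in Hgg. destruct Hgg as [r Hr].
    assert (Hrp : (r * p = 1)%Z).
    { apply (Z.mul_reg_l _ _ p); [lia|]. rewrite Z.mul_1_r. rewrite Hr at 3. ring. }
    assert (Hp2 : (2 <= p)%Z) by (apply prime_ge_2; auto). clear -Hrp Hp2. destruct (Z_le_gt_dec r 0); nia. }
  apply Zgcd_1_rel_prime in Hg. destruct (rel_prime_bezout _ _ Hg) as [u0 v0 Hb].
  exists (- v0)%Z, u0. lia.
Qed.

Lemma NT3 D k p A B x y : (D = 4 * k + 3)%Z -> ~ (p | D)%Z ->
  p = (A * A + A * B + (k + 1) * B * B)%Z -> (A * y - B * x = 1)%Z ->
  ~ (p | 2 * ((A + B) * x + (k + 1) * B * y) + (A * y - B * x))%Z.
Proof.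
  intros HDk Hnd Hpe Hdet [m Hm]. apply Hnd.
  set (t1 := ((A + B) * x + (k + 1) * B * y)%Z) in *.
  assert (Hid : (t1 * t1 + t1 * (A * y - B * x) + (k + 1) * (A * y - B * x) * (A * y - B * x)
     = (A * A + A * B + (k + 1) * B * B) * (x * x + x * y + (k + 1) * y * y))%Z)
    by (unfold t1; ring).
  rewrite Hdet, <- Hpe in Hid. rewrite Hdet in Hm.
  exists (4 * (x * x + x * y + (k + 1) * y * y) - m * m * p)%Z.
  rewrite HDk. nia.
Qed.

Lemma NT5 p r : p <> 0%Z -> e (IZR r / IZR p, 0) = Defs.C1 -> (p | r)%Z.
Proof.
  intros Hp H. destruct (e_one_int _ H) as [m Hm]. exists m.
  apply eq_IZR. rewrite mult_IZR.
  assert (IZR p <> 0) by (apply not_0_IZR; auto).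
  apply (Rmult_eq_reg_r (/ IZR p)); [|apply Rinv_neq_0_compat; auto].
  rewrite <- Hm. field; auto.
Qed.


Lemma Csum_flat_map {T} (F : Cx -> Cx) (g : T -> list Cx) l :
  Csum (map F (flat_map g l)) = Csum (map (fun x => Csum (map F (g x))) l).
Proof. induction l; simpl; auto. rewrite map_app, Csum_app, IHl. reflexivity. Qed.

Lemma reps_S2 D u c F : Csum (map F (reps D u c)) = S2 (Z.abs c) (fun X Y => F (Cadd u (OZ D X Y))).
Proof.
  unfold reps, S2, S1, NS. rewrite Csum_flat_map. f_equal. apply map_ext. intro i.
  rewrite map_map. reflexivity.
Qed.

Lemma OZ_add D g X Y X' Y' : Cadd (Cadd g (OZ D X Y)) (OZ D X' Y') = Cadd g (OZ D (X + X') (Y + Y')).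
Proof. destruct g. unfold OZ, Cadd; simpl. pushZ. apply cx_eq; field. Qed.

Lemma term_mul c a d w z g n r : targ c a d w z = Cadd (Cadd (targ c a d w g) (IZR n, 0)) r ->
  term c a d w z = Cmul (term c a d w g) (e r).
Proof.
  intro H. unfold term. rewrite H, !e_add, e_int. destruct (e (targ c a d w g)), (e r).
  unfold Cmul, Defs.C1; simpl; apply cx_eq; ring.
Qed.

Lemma Nm_mul z w : Nm (Cmul z w) = Cmul (Nm z) (Nm w).
Proof. destruct z, w; unfold Nm, Cmul, Cconj; simpl; apply cx_eq; ring. Qed.

Lemma Cmul_fix X z : X = Cmul X z -> z <> Defs.C1 -> X = C0.
Proof.
  destruct X as [x1 x2], z as [z1 z2]. unfold Cmul, Defs.C1, C0; simpl. intros H Hz.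
  injection H as H1 H2.
  assert (Hn : (z1 - 1) * (z1 - 1) + z2 * z2 <> 0).
  { intro H0. apply Hz. pose proof (Rle_0_sqr (z1 - 1)). pose proof (Rle_0_sqr z2). unfold Rsqr in *.
    assert (Q1 : z2 * z2 = 0) by lra. assert (Q2 : (z1 - 1) * (z1 - 1) = 0) by lra.
    apply Rmult_integral in Q1. apply Rmult_integral in Q2. f_equal; lra. }
  assert (E1 : x1 * (z1 - 1) - x2 * z2 = 0) by lra.
  assert (E2 : x2 * (z1 - 1) + x1 * z2 = 0) by lra.
  assert (x1 * ((z1 - 1) * (z1 - 1) + z2 * z2) = 0).
  { transitivity ((z1 - 1) * (x1 * (z1 - 1) - x2 * z2) + z2 * (x2 * (z1 - 1) + x1 * z2)); [ring|rewrite E1, E2; ring]. }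
  assert (x2 * ((z1 - 1) * (z1 - 1) + z2 * z2) = 0).
  { transitivity ((z1 - 1) * (x2 * (z1 - 1) + x1 * z2) - z2 * (x1 * (z1 - 1) - x2 * z2)); [ring|rewrite E1, E2; ring]. }
  apply cx_eq.
  - apply Rmult_integral in H. destruct H; auto. contradiction.
  - apply Rmult_integral in H0. destruct H0; auto. contradiction.
Qed.

Lemma M_unfold D u v a b c d : c <> 0%Z ->
  M D u v a b c d = Cmul (0, - / (IZR c * sqrt (IZR D))) (Csum (map (term c a d v) (reps D u c))).
Proof. intro H. unfold M. replace (c =? 0)%Z with false by (symmetry; apply Z.eqb_neq; auto). reflexivity. Qed.

Theorem proposition3p6 (D : Z) (p : Z) (pi : Cx)
  (HDprime : prime D) (HDdisc : (D mod 4 = 3)%Z)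
  (Hh1 : class_number_one D)
  (Hp : prime p) (Hp2 : (2 < p)%Z) (Hsplit : chiK_is_one D p)
  (Hpi : In_O D pi) (HNpi : Nm pi = (IZR p, 0)) :
  forall (u v : Cx), In_Dinv D u -> In_Dinv D v ->
  forall a b c d : Z, (a * d - b * c = 1)%Z -> (p | c)%Z ->
    M D (Cmul pi u) (Cmul pi v) a b c d = M D u v a (p * b) (c / p) d.
Proof.
  intros u v Hu Hv a b c d Hdet [q Hq].
  pose proof (prime_ge_2 D HDprime) as HD2.
  assert (HD : (0 < D)%Z) by lia.
  set (k := (D / 4)%Z).
  assert (HDk : D = (4 * k + 3)%Z) by (pose proof (Z.div_mod D 4); unfold k; lia).
  destruct Hsplit as [Hnd _].
  assert (Hp0 : (p <> 0)%Z) by lia.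
  assert (Hcq : (c / p = q)%Z) by (rewrite Hq; apply Z.div_mul; auto).
  rewrite Hcq.
  assert (Hc : c = (p * q)%Z) by lia. clear Hq.
  destruct (Z.eq_dec q 0) as [Hq0|Hq0].
  -
    assert (Hc0 : c = 0%Z) by lia. rewrite Hc0, Hq0. unfold M. rewrite Z.eqb_refl.
    assert (Hw : In_Dinv D (Csub u (Cscale (IZR a) v))).
    { unfold In_Dinv.
      replace (Cmul (Csub u (Cscale (IZR a) v)) (sqrtmD D)) with
        (Cadd (Cmul u (sqrtmD D)) (Cscale (IZR (- a)) (Cmul v (sqrtmD D))))
        by (rewrite opp_IZR; cxe; apply cx_eq; ring).
      apply O_add; auto. apply O_scale; auto. }
    assert (Heq : Csub (Cmul pi u) (Cscale (IZR a) (Cmul pi v)) = Cmul pi (Csub u (Cscale (IZR a) v)))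
      by (cxe; apply cx_eq; ring).
    assert (Hdl : Rdelta (In_O D (Csub (Cmul pi u) (Cscale (IZR a) (Cmul pi v)))) =
                  Rdelta (In_O D (Csub u (Cscale (IZR a) v)))).
    { rewrite Heq. unfold Rdelta.
      destruct (excluded_middle_informative (In_O D (Cmul pi (Csub u (Cscale (IZR a) v))))) as [H1|H1];
      destruct (excluded_middle_informative (In_O D (Csub u (Cscale (IZR a) v)))) as [H2|H2]; auto.
      - exfalso. apply H2. apply (O_cancel D k p pi); auto.
      - exfalso. apply H1. apply (O_mul D k); auto. }
    rewrite Hdl.
    assert (HNm : Nm (Cmul pi u) = Cmul (Nm pi) (Nm u)) by apply Nm_mul.
    rewrite HNm, HNpi. f_equal. f_equal. rewrite !mult_IZR. destruct u as [u1 u2]. unfold Cscale, Cmul, Nm, Cconj; simpl. apply cx_eq; ring.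
  -
    assert (Hc0 : c <> 0%Z) by lia.
    rewrite !M_unfold by auto. rewrite !reps_S2.
    destruct (NT1 D k p pi HDk HD Hpi HNpi) as [A [B [Epi Hpe]]].
    destruct (NT2 p A B k Hp Hpe) as [x [y Hxy]].
    destruct (Dinv_form D u HD Hu) as [ua [ub Eu]].
    destruct (Dinv_form D v HD Hv) as [va [vb Ev]].
    set (th1 := ((A + B) * x + (k + 1) * B * y)%Z).
    set (T := (2 * th1 + (A * y - B * x))%Z).
    set (n := Z.abs c). set (n' := Z.abs q).
    assert (Hn : n = (p * n')%Z) by (unfold n, n'; rewrite Hc, Z.abs_mul; f_equal; lia).
    assert (Hnpos : (0 < n)%Z) by (unfold n; lia).
    assert (Hn'pos : (0 < n')%Z) by (unfold n'; lia).
    assert (Hnc : exists i, n = (c * i)%Z) by (unfold n; destruct (Z_lt_le_dec 0 c); [exists 1%Z|exists (-1)%Z]; lia).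
    assert (Hnq : exists i, n' = (q * i)%Z) by (unfold n'; destruct (Z_lt_le_dec 0 q); [exists 1%Z|exists (-1)%Z]; lia).
    destruct Hnc as [ic Hic]. destruct Hnq as [iq Hiq].
    set (HL := fun X Y => term c a d (Cmul pi v) (Cadd (Cmul pi u) (OZ D X Y))).
    set (HR := fun X Y => term q a d v (Cadd u (OZ D X Y))).
    change (S2 n (fun X Y => term c a d (Cmul pi v) (Cadd (Cmul pi u) (OZ D X Y)))) with (S2 n HL).
    change (S2 n' (fun X Y => term q a d v (Cadd u (OZ D X Y)))) with (S2 n' HR).
    assert (HLper : forall X Y i j, HL (X + c * i)%Z (Y + c * j)%Z = HL X Y).
    { intros X Y i j. unfold HL. rewrite <- OZ_add. apply (P_lem D k); auto.
      - apply (Dinv_addO D k); auto. apply (Dinv_mulO D k); auto.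
      - apply (Dinv_mulO D k); auto. }
    assert (HRper : forall X Y i j, HR (X + q * i)%Z (Y + q * j)%Z = HR X Y).
    { intros X Y i j. unfold HR. rewrite <- OZ_add. apply (P_lem D k); auto.
      apply (Dinv_addO D k); auto. }
    assert (Hpa : ~ (p | a)%Z).
    { intros [m Hm]. assert (Hone : (p * (m * d - b * q) = 1)%Z) by (rewrite Hc in Hdet; lia).
      assert (Hpg : (p | 1)%Z) by (exists (m * d - b * q)%Z; lia).
      apply Z.divide_1_r in Hpg. lia. }
    assert (HpT : ~ (p | T)%Z) by (apply (NT3 D k p A B x y); auto).
    rewrite <- (L3 n HL x A y B).
    2: auto.
    2: intros X Y; rewrite Hic; rewrite <- (HLper X Y ic 0%Z); f_equal; lia.
    2: intros X Y; rewrite Hic; rewrite <- (HLper X Y 0%Z ic); f_equal; lia.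
    2: lia.
    set (G := fun t => S1 n (fun sg => HL (x * t + A * sg)%Z (y * t + B * sg)%Z)).
    change (S2 n (fun X Y => HL (x * X + A * Y)%Z (y * X + B * Y)%Z)) with (S1 n G).
    assert (Gz : forall t, ~ (p | t)%Z -> G t = C0).
    { intros t Ht.
      set (Kt := fun sg => HL (x * t + A * sg)%Z (y * t + B * sg)%Z).
      assert (Kper : forall sg, Kt (sg + n)%Z = Kt sg).
      { intro sg. unfold Kt. rewrite <- (HLper (x * t + A * sg)%Z (y * t + B * sg)%Z (A * ic)%Z (B * ic)%Z).
        f_equal; rewrite Hic; ring. }
      set (zeta := e (IZR (a * t * T) / IZR p, 0)).
      assert (Kshift : forall sg, Kt (sg + q)%Z = Cmul (Kt sg) zeta).
      { intro sg. unfold Kt, HL, zeta. apply (term_mul _ _ _ _ _ _ (a * ub + 2 * a * sg + a * q - vb)%Z).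
        rewrite Epi, Hc, Eu, Ev. apply (SH_lem D k p A B x y ua ub va vb a d q t sg); auto.
        rewrite <- Epi. auto. }
      assert (Hz1 : zeta <> Defs.C1).
      { intro Hz. apply NT5 in Hz; auto.
        apply (prime_mult p Hp) in Hz. destruct Hz as [Hz|Hz]; [|contradiction].
        apply (prime_mult p Hp) in Hz. destruct Hz as [Hz|Hz]; contradiction. }
      apply (Cmul_fix _ zeta); auto.
      unfold G. fold Kt.
      rewrite <- (S1_shift n Kt Kper q) at 1.
      transitivity (S1 n (fun sg => Cmul (Kt sg) zeta)).
      - apply S1_ext. intro; apply Kshift.
      - unfold S1. apply NS_mulr. }
    rewrite Hn at 1. rewrite (S1_filter n' p G) by (auto; lia).
    assert (Gp : forall t, G (p * t)%Z = Cscale (IZR p) (S1 n' (fun sg => HR sg t))).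
    { intro t. unfold G.
      transitivity (S1 n (fun sg => HR (sg + t * th1)%Z t)).
      { apply S1_ext. intro sg. unfold HL, HR.
        rewrite Epi. rewrite (KP_lem D k p A B x y u sg t) by (auto; rewrite <- Epi; auto).
        rewrite Hxy, Z.mul_1_r. rewrite Hc. apply SC_lem; auto. rewrite <- Epi; auto. }
      rewrite Hn. rewrite S1_mult by (try lia; intro z; rewrite Hiq;
          rewrite <- (HRper (z + t * th1)%Z t iq 0%Z); f_equal; ring).
      f_equal. apply (S1_shift n' (fun sg => HR sg t)).
      intro z; rewrite Hiq. rewrite <- (HRper z t iq 0%Z). f_equal; ring. }
    rewrite (S1_ext _ _ _ Gp).
    transitivity (Cmul (0, - / (IZR c * sqrt (IZR D))) (Cscale (IZR p) (S2 n' (fun t sg => HR sg t)))).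
    { f_equal. unfold S1 at 1. rewrite NS_scale. reflexivity. }
    rewrite <- (L3 n' HR 0 1 1 0).
    2: auto.
    2: intros X Y; rewrite Hiq; rewrite <- (HRper X Y iq 0%Z); f_equal; lia.
    2: intros X Y; rewrite Hiq; rewrite <- (HRper X Y 0%Z iq); f_equal; lia.
    2: lia.
    assert (Eswap : S2 n' (fun t sg => HR sg t) = S2 n' (fun X Y => HR (0 * X + 1 * Y)%Z (1 * X + 0 * Y)%Z)).
    { unfold S2. apply S1_ext; intro; apply S1_ext; intro. f_equal; ring. }
    rewrite Eswap.
    pose proof (sqrt_pos' D HD).
    assert (IZR p <> 0) by (apply not_0_IZR; auto).
    assert (IZR q <> 0) by (apply not_0_IZR; auto).
    destruct (S2 n' (fun X Y => HR (0 * X + 1 * Y)%Z (1 * X + 0 * Y)%Z)) as [z1 z2].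
    rewrite Hc, mult_IZR. unfold Cmul, Cscale; simpl. apply cx_eq; field; lra.
Qed.
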